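(* Let $M$ be a monoidal category which admits functorial inverses and let $f:x\to x'$ be a morphism in $M$. Then for all objects $y,z\in M$ the maps $$(-)\otimes f: M(y,z)\to M(y\otimes x, z\otimes x'),\qquad f\otimes(-): M(y,z)\to M(x\otimes y, x'\otimes z)$$ are bijections.
   Context: A monoidal category $M$ admits functorial inverses if there exist a functor $i:M\to M$ and a natural isomorphism $x\otimes i(x)\cong 1$. $M(a,b)$ denotes the set of morphisms from $a$ to $b$ in $M$. *)

(* Defs.v *)
From mathcomp Require Import ssreflect ssrfun.

Set Implicit Arguments.
Unset Strict Implicit.

Record Category := {
  Ob :> Type;
  Hom : Ob -> Ob -> Type;
  idm : forall a, Hom a a;
  comp : forall a b c, Hom b c -> Hom a b -> Hom a c;
  comp_id_l : forall a b (f : Hom a b), comp (idm b) f = f;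
  comp_id_r : forall a b (f : Hom a b), comp f (idm a) = f;
  comp_assoc : forall a b c d (f : Hom a b) (g : Hom b c) (h : Hom c d),
      comp h (comp g f) = comp (comp h g) f
}.
Arguments Hom {C} : rename.
Arguments idm {C} a : rename.
Arguments comp {C a b c} : rename.

Record MonoidalData (C : Category) := {
  tens : C -> C -> C;
  tensm : forall a a' b b', Hom a a' -> Hom b b' -> Hom (tens a b) (tens a' b');
  munit : C;
  assoc : forall a b c, Hom (tens (tens a b) c) (tens a (tens b c));
  assoc_inv : forall a b c, Hom (tens a (tens b c)) (tens (tens a b) c);
  lunit : forall a, Hom (tens munit a) a;
  lunit_inv : forall a, Hom a (tens munit a);
  runit : forall a, Hom (tens a munit) a;
  runit_inv : forall a, Hom a (tens a munit)
}.
Arguments tens {C} m.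
Arguments tensm {C} m {a a' b b'}.
Arguments munit {C} m.
Arguments assoc {C} m a b c.
Arguments assoc_inv {C} m a b c.
Arguments lunit {C} m a.
Arguments lunit_inv {C} m a.
Arguments runit {C} m a.
Arguments runit_inv {C} m a.

Record MonoidalLaws (C : Category) (D : MonoidalData C) : Prop := {
  tensm_id : forall a b, tensm D (idm a) (idm b) = idm (tens D a b);
  tensm_comp : forall a1 a2 a3 b1 b2 b3 (f : Hom a1 a2) (g : Hom a2 a3)
      (f' : Hom b1 b2) (g' : Hom b2 b3),
      tensm D (comp g f) (comp g' f') = comp (tensm D g g') (tensm D f f');
  assoc_iso1 : forall a b c, comp (assoc_inv D a b c) (assoc D a b c) = idm _;
  assoc_iso2 : forall a b c, comp (assoc D a b c) (assoc_inv D a b c) = idm _;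
  assoc_nat : forall a a' b b' c c' (f : Hom a a') (g : Hom b b') (h : Hom c c'),
      comp (assoc D a' b' c') (tensm D (tensm D f g) h)
      = comp (tensm D f (tensm D g h)) (assoc D a b c);
  lunit_iso1 : forall a, comp (lunit_inv D a) (lunit D a) = idm _;
  lunit_iso2 : forall a, comp (lunit D a) (lunit_inv D a) = idm _;
  lunit_nat : forall a a' (f : Hom a a'),
      comp (lunit D a') (tensm D (idm (munit D)) f) = comp f (lunit D a);
  runit_iso1 : forall a, comp (runit_inv D a) (runit D a) = idm _;
  runit_iso2 : forall a, comp (runit D a) (runit_inv D a) = idm _;
  runit_nat : forall a a' (f : Hom a a'),
      comp (runit D a') (tensm D f (idm (munit D))) = comp f (runit D a);
  pentagon : forall a b c d,
      comp (assoc D a b (tens D c d)) (assoc D (tens D a b) c d)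
      = comp (tensm D (idm a) (assoc D b c d))
          (comp (assoc D a (tens D b c) d) (tensm D (assoc D a b c) (idm d)));
  triangle : forall a b,
      comp (tensm D (idm a) (lunit D b)) (assoc D a (munit D) b)
      = tensm D (runit D a) (idm b)
}.

Record MonoidalCategory := {
  mcat :> Category;
  mdata : MonoidalData mcat;
  mlaws : MonoidalLaws mdata
}.

(** [M] admits functorial inverses: a functor [i : M -> M] and a natural
    isomorphism [eta_x : x ⊗ i(x) ≅ 1] (natural in x; target functor constant 1). *)
Definition admits_functorial_inverses (M : MonoidalCategory) : Prop :=
  let D := mdata M in
  exists (i : M -> M) (im : forall a b, Hom a b -> Hom (i a) (i b))
         (eta : forall a, Hom (tens D a (i a)) (munit D))
         (eta_inv : forall a, Hom (munit D) (tens D a (i a))),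
    (forall a, im a a (idm a) = idm (i a)) /\
    (forall a b c (f : Hom a b) (g : Hom b c),
        im a c (comp g f) = comp (im b c g) (im a b f)) /\
    (forall a, comp (eta_inv a) (eta a) = idm _) /\
    (forall a, comp (eta a) (eta_inv a) = idm _) /\
    (forall a b (f : Hom a b), comp (eta b) (tensm D f (im a b f)) = eta a).

(* Main.v *)
Require Import Defs.
From mathcomp Require Import ssreflect ssrfun.
Set Implicit Arguments.

Section Right.
Variable C : Category.
Variable D : MonoidalData C.
Local Notation "g ⊚ f" := (Defs.comp g f) (at level 40, left associativity).
Local Notation "f ⊗ g" := (tensm D f g) (at level 35).
Hypothesis Tid : forall a b, idm a ⊗ idm b = idm (tens D a b).
Hypothesis Tcomp : forall (a1 a2 a3 b1 b2 b3 : C) (f : Hom a1 a2) (g : Hom a2 a3)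
      (f' : Hom b1 b2) (g' : Hom b2 b3), (g ⊚ f) ⊗ (g' ⊚ f') = (g ⊗ g') ⊚ (f ⊗ f').
Hypothesis Aiso1 : forall a b c, assoc_inv D a b c ⊚ assoc D a b c = idm _.
Hypothesis Aiso2 : forall a b c, assoc D a b c ⊚ assoc_inv D a b c = idm _.
Hypothesis Anat : forall (a a' b b' c c' : C) (f : Hom a a') (g : Hom b b') (h : Hom c c'),
      assoc D a' b' c' ⊚ ((f ⊗ g) ⊗ h) = (f ⊗ (g ⊗ h)) ⊚ assoc D a b c.
Hypothesis Riso1 : forall a, runit_inv D a ⊚ runit D a = idm _.
Hypothesis Riso2 : forall a, runit D a ⊚ runit_inv D a = idm _.
Hypothesis Rnat : forall (a a' : C) (f : Hom a a'),
      runit D a' ⊚ (f ⊗ idm (munit D)) = f ⊚ runit D a.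
Variable j : C -> C.
Variable jm : forall a b, Hom a b -> Hom (j a) (j b).
Variable e : forall a, Hom (tens D a (j a)) (munit D).
Variable ei : forall a, Hom (munit D) (tens D a (j a)).
Hypothesis Eiso1 : forall a, ei a ⊚ e a = idm _.
Hypothesis Eiso2 : forall a, e a ⊚ ei a = idm _.
Hypothesis Enat : forall (a b : C) (f : Hom a b), e b ⊚ (f ⊗ jm _ _ f) = e a.

Lemma L1 (a b c d : C) (X : Hom c d) (u : Hom b c) (v : Hom a b) (w : Hom a c) :
  u ⊚ v = w -> X ⊚ u ⊚ v = X ⊚ w.
Proof. by move=> <-; rewrite comp_assoc. Qed.
Arguments L1 {a b c d X u v w}.

Lemma cancel4 (a b c d : C) (P : Hom a b) (Q : Hom b a) (K : Hom c a) (Q' : Hom d c) (P' : Hom c d) :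
  Q ⊚ P = idm _ -> Q' ⊚ P' = idm _ -> Q ⊚ (P ⊚ K ⊚ Q') ⊚ P' = K.
Proof. move=> H1 H2. by rewrite !comp_assoc H1 comp_id_l -comp_assoc H2 comp_id_r. Qed.

Definition U a w : Hom (tens D (tens D a w) (j w)) a :=
  runit D a ⊚ (idm a ⊗ e w) ⊚ assoc D a w (j w).
Definition V a w : Hom a (tens D (tens D a w) (j w)) :=
  assoc_inv D a w (j w) ⊚ (idm a ⊗ ei w) ⊚ runit_inv D a.

Lemma UV a w : U a w ⊚ V a w = idm _.
Proof.
rewrite /U /V !comp_assoc (L1 (Aiso2 _ _ _)) comp_id_r.
rewrite (L1 (esym (Tcomp _ _ _ _ _ _ _ _ _ _))) comp_id_l Eiso2 Tid comp_id_r. exact: Riso2.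
Qed.

Lemma VU a w : V a w ⊚ U a w = idm _.
Proof.
rewrite /U /V !comp_assoc (L1 (Riso1 _)) comp_id_r.
rewrite (L1 (esym (Tcomp _ _ _ _ _ _ _ _ _ _))) comp_id_l Eiso1 Tid comp_id_r. exact: Aiso1.
Qed.

Definition Psi (x x' : C) (f : Hom x x') y z (h : Hom (tens D y x) (tens D z x')) : Hom y z :=
  U z x' ⊚ (h ⊗ jm _ _ f) ⊚ V y x.

Arguments Psi {x x'} f {y z} h.
Lemma PsiPhi (x x' : C) (f : Hom x x') y z (g : Hom y z) : Psi f (g ⊗ f) = g.
Proof.
rewrite /Psi /U /V !comp_assoc.
rewrite (L1 (Anat _ _ _ _ _ _ _ _ _)) !comp_assoc (L1 (Aiso2 _ _ _)) comp_id_r.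
rewrite (L1 (esym (Tcomp _ _ _ _ _ _ _ _ _ _))).
rewrite (L1 (esym (Tcomp _ _ _ _ _ _ _ _ _ _))).
rewrite comp_id_l comp_id_r [e x' ⊚ _]comp_assoc Enat Eiso2.
rewrite Rnat -comp_assoc Riso2 comp_id_r //.
Qed.

Arguments PsiPhi {x x'} f {y z} g.
Lemma Phi_inj (x x' : C) (f : Hom x x') y z : injective (fun g : Hom y z => g ⊗ f).
Proof. move=> g1 g2 /= H. by rewrite -(PsiPhi f g1) H PsiPhi. Qed.

Lemma Psi_inj (x x' : C) (f : Hom x x') y z : injective (@Psi x x' f y z).
Proof.
move=> h1 h2 H.
have H2 : h1 ⊗ jm _ _ f = h2 ⊗ jm _ _ f.
  have := f_equal (fun k => V z x' ⊚ k ⊚ U y x) H.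
  rewrite /Psi /=.
  have E : forall h : Hom (tens D y x) (tens D z x'),
      V z x' ⊚ (U z x' ⊚ (h ⊗ jm _ _ f) ⊚ V y x) ⊚ U y x = h ⊗ jm _ _ f.
    move=> h. by apply: cancel4; apply: VU.
  by rewrite !E.
exact: (@Phi_inj _ _ (jm _ _ f) _ _ _ _ H2).
Qed.

Lemma right_bij x x' (f : Hom x x') y z : bijective (fun g : Hom y z => g ⊗ f).
Proof.
exists (@Psi x x' f y z) => [g|h]; first exact: PsiPhi.
apply: (@Psi_inj x x' f). exact: PsiPhi.
Qed.
End Right.
Arguments L1 {C a b c d X u v w}.
Section Main.
Variable C : Category.
Variable D : MonoidalData C.
Variable L : MonoidalLaws D.
Local Notation "g ⊚ f" := (Defs.comp g f) (at level 40, left associativity).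
Local Notation "f ⊗ g" := (tensm D f g) (at level 35).
Variable i : C -> C.
Variable im : forall a b, Hom a b -> Hom (i a) (i b).
Variable eta : forall a, Hom (tens D a (i a)) (munit D).
Variable etai : forall a, Hom (munit D) (tens D a (i a)).
Hypothesis Eiso1 : forall a, etai a ⊚ eta a = idm _.
Hypothesis Eiso2 : forall a, eta a ⊚ etai a = idm _.
Hypothesis Enat : forall (a b : C) (f : Hom a b), eta b ⊚ (f ⊗ im _ _ f) = eta a.

Lemma inv_nat (a b c d : C) (u : Hom a b) (u' : Hom b a) (v : Hom c d) (v' : Hom d c)
  (x : Hom c a) (y : Hom d b) :
  u' ⊚ u = idm _ -> v ⊚ v' = idm _ -> u ⊚ x = y ⊚ v -> x ⊚ v' = u' ⊚ y.
Proof.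
move=> H1 H2 H.
by rewrite -[x]comp_id_l -H1 -[u' ⊚ u ⊚ x]comp_assoc H !comp_assoc -[u' ⊚ y ⊚ v ⊚ v']comp_assoc H2 comp_id_r.
Qed.

Lemma Tc (a1 a2 a3 b1 b2 b3 : C) (f : Hom a1 a2) (g : Hom a2 a3) (f' : Hom b1 b2) (g' : Hom b2 b3) :
  (g ⊗ g') ⊚ (f ⊗ f') = (g ⊚ f) ⊗ (g' ⊚ f').
Proof. by rewrite (tensm_comp L). Qed.
Arguments Tc {a1 a2 a3 b1 b2 b3}.

Lemma Ainv_nat (a a' b b' c c' : C) (f : Hom a a') (g : Hom b b') (h : Hom c c') :
  ((f ⊗ g) ⊗ h) ⊚ assoc_inv D a b c = assoc_inv D a' b' c' ⊚ (f ⊗ (g ⊗ h)).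
Proof. apply: inv_nat; [exact: (assoc_iso1 L)|exact: (assoc_iso2 L)|exact: (assoc_nat L)]. Qed.

Lemma Rinv_nat (a a' : C) (f : Hom a a') : (f ⊗ idm (munit D)) ⊚ runit_inv D a = runit_inv D a' ⊚ f.
Proof. apply: inv_nat; [exact: (runit_iso1 L)|exact: (runit_iso2 L)|exact: (runit_nat L)]. Qed.

Lemma Linv_nat (a a' : C) (f : Hom a a') : (idm (munit D) ⊗ f) ⊚ lunit_inv D a = lunit_inv D a' ⊚ f.
Proof. apply: inv_nat; [exact: (lunit_iso1 L)|exact: (lunit_iso2 L)|exact: (lunit_nat L)]. Qed.

Lemma Einv_nat (a b : C) (f : Hom a b) : (f ⊗ im _ _ f) ⊚ etai a = etai b.
Proof.
have := @inv_nat _ _ _ _ (eta b) (etai b) (eta a) (etai a) (f ⊗ im _ _ f) (idm _) (Eiso1 b) (Eiso2 a).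
rewrite comp_id_r comp_id_l => H; apply: H; apply: Enat.
Qed.

Definition th a : Hom a (i (i a)) :=
  lunit D (i (i a)) ⊚ (eta a ⊗ idm _) ⊚ assoc_inv D a (i a) (i (i a))
  ⊚ (idm a ⊗ etai (i a)) ⊚ runit_inv D a.
Definition thi a : Hom (i (i a)) a :=
  runit D a ⊚ (idm a ⊗ eta (i a)) ⊚ assoc D a (i a) (i (i a))
  ⊚ (etai a ⊗ idm _) ⊚ lunit_inv D (i (i a)).

Lemma chain5 (a0 a1 a2 a3 a4 a5 : C) (g1 : Hom a1 a0) (g2 : Hom a2 a1) (g3 : Hom a3 a2)
  (g4 : Hom a4 a3) (g5 : Hom a5 a4) h1 h2 h3 h4 h5 :
  h1 ⊚ g1 = idm _ -> h2 ⊚ g2 = idm _ -> h3 ⊚ g3 = idm _ -> h4 ⊚ g4 = idm _ -> h5 ⊚ g5 = idm _ ->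
  h5 ⊚ h4 ⊚ h3 ⊚ h2 ⊚ h1 ⊚ (g1 ⊚ g2 ⊚ g3 ⊚ g4 ⊚ g5) = idm _.
Proof.
move=> H1 H2 H3 H4 H5.
rewrite !comp_assoc -[_ ⊚ h1 ⊚ g1]comp_assoc H1 comp_id_r.
rewrite -[_ ⊚ h2 ⊚ g2]comp_assoc H2 comp_id_r.
rewrite -[_ ⊚ h3 ⊚ g3]comp_assoc H3 comp_id_r.
rewrite -[_ ⊚ h4 ⊚ g4]comp_assoc H4 comp_id_r. done.
Qed.

Lemma tiso1 (a b : C) (u : Hom a b) (v : Hom b a) (d : C) : v ⊚ u = idm _ -> (v ⊗ idm d) ⊚ (u ⊗ idm d) = idm _.
Proof. by move=> H; rewrite Tc H comp_id_l (tensm_id L). Qed.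
Lemma tiso2 (a b : C) (u : Hom a b) (v : Hom b a) (d : C) : v ⊚ u = idm _ -> (idm d ⊗ v) ⊚ (idm d ⊗ u) = idm _.
Proof. by move=> H; rewrite Tc H comp_id_l (tensm_id L). Qed.

Lemma th_iso1 a : thi a ⊚ th a = idm _.
Proof.
rewrite /th /thi; apply: chain5.
- exact: (lunit_iso1 L).
- apply: tiso1. exact: Eiso1.
- exact: (assoc_iso2 L).
- apply: tiso2. exact: Eiso2.
- exact: (runit_iso2 L).
Qed.

Lemma th_iso2 a : th a ⊚ thi a = idm _.
Proof.
rewrite /th /thi; apply: chain5.
- exact: (runit_iso1 L).
- apply: tiso2. exact: Eiso1.
- exact: (assoc_iso1 L).
- apply: tiso1. exact: Eiso2.
- exact: (lunit_iso2 L).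
Qed.
Lemma th_nat (a b : C) (f : Hom a b) : th b ⊚ f = im _ _ (im _ _ f) ⊚ th a.
Proof.
rewrite /th.
rewrite -[_ ⊚ runit_inv D b ⊚ f]comp_assoc -Rinv_nat comp_assoc.
rewrite (L1 (Tc _ _ _ _)) comp_id_l comp_id_r -(Einv_nat _ _ (im _ _ f)).
rewrite -[f in f ⊗ (_ ⊚ _)]comp_id_r -Tc comp_assoc.
rewrite (L1 (esym (Ainv_nat _ _ _ _ _ _ _ _ _))) comp_assoc.
rewrite (L1 (Tc _ _ _ _)) Enat comp_id_l.
rewrite -{1}[eta a]comp_id_l -{1}[im _ _ (im _ _ f)]comp_id_r -Tc.
rewrite [lunit D _ ⊚ (_ ⊚ _)]comp_assoc (lunit_nat L) !comp_assoc //.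
Qed.

Definition ep a : Hom (tens D (i a) a) (munit D) := eta (i a) ⊚ (idm (i a) ⊗ th a).
Definition epi a : Hom (munit D) (tens D (i a) a) := (idm (i a) ⊗ thi a) ⊚ etai (i a).

Lemma chain2 (a0 a1 a2 : C) (g1 : Hom a1 a0) (g2 : Hom a2 a1) h1 h2 :
  h1 ⊚ g1 = idm _ -> h2 ⊚ g2 = idm _ -> h2 ⊚ h1 ⊚ (g1 ⊚ g2) = idm _.
Proof. move=> H1 H2. by rewrite comp_assoc -[h2 ⊚ h1 ⊚ g1]comp_assoc H1 comp_id_r. Qed.

Lemma ep_iso1 a : epi a ⊚ ep a = idm _.
Proof. apply: chain2; [exact: Eiso1 | apply: tiso2; exact: th_iso1]. Qed.
Lemma ep_iso2 a : ep a ⊚ epi a = idm _.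
Proof. apply: chain2; [apply: tiso2; exact: th_iso2 | exact: Eiso2]. Qed.

Lemma ep_nat (a b : C) (f : Hom a b) : ep b ⊚ (im _ _ f ⊗ f) = ep a.
Proof.
rewrite /ep -comp_assoc Tc comp_id_l th_nat.
rewrite -{1}[im a b f]comp_id_r -Tc comp_assoc Enat //.
Qed.
End Main.

Theorem lemma3p14 (M : MonoidalCategory) (HM : admits_functorial_inverses M)
    (x x' : M) (f : Hom x x') (y z : M) :
  bijective (fun g : Hom y z => tensm (mdata M) g f) /\
  bijective (fun g : Hom y z => tensm (mdata M) f g).
Proof.
case: HM => i [im [eta [etai [_ [_ [E1 [E2 En]]]]]]].
have L := mlaws M.
split.
  apply: (@right_bij _ (mdata M) _ _ _ _ _ _ _ _ i im eta etai).
  1-11: first [exact: (tensm_id L) | exact: (tensm_comp L) | exact: (assoc_iso1 L)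
    | exact: (assoc_iso2 L) | exact: (assoc_nat L) | exact: (runit_iso1 L) | exact: (runit_iso2 L)
    | exact: (runit_nat L) | exact: E1 | exact: E2 | exact: En].
pose D := mdata M.
pose Dr := @Build_MonoidalData M (fun a b => tens D b a) (fun a a' b b' f g => tensm D g f)
  (munit D) (fun a b c => assoc_inv D c b a) (fun a b c => assoc D c b a)
  (fun a => runit D a) (fun a => runit_inv D a) (fun a => lunit D a) (fun a => lunit_inv D a).
apply: (@right_bij _ Dr _ _ _ _ _ _ _ _ i im (ep D i eta etai) (epi D i eta etai)).
- move=> a b; exact: (tensm_id L).
- move=> *; exact: (tensm_comp L).
- move=> *; exact: (assoc_iso2 L).
- move=> *; exact: (assoc_iso1 L).
- move=> a a' b b' c c' f0 g h; exact: (esym (Ainv_nat L c c' b b' a a' h g f0)).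
- move=> *; exact: (lunit_iso1 L).
- move=> *; exact: (lunit_iso2 L).
- move=> *; exact: (lunit_nat L).
- move=> *; exact: (@ep_iso1 _ _ L i eta etai E1 E2 _).
- move=> *; exact: (@ep_iso2 _ _ L i eta etai E1 E2 _).
- move=> *; exact: (@ep_nat _ _ L i im eta etai E1 E2 En _ _ _).
Qed.
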